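(* Let $\mathbf{k}=\bigoplus_{i=1}^N\mathbb{F}_2$, let $A$ and $B$ be differential graded algebras over $\mathbf{k}$, and let $f,g\colon A\to B$ be $\mathcal{A}_\infty$-homomorphisms. Suppose the rank-one type DA bimodules ${}^{B}[f]_A$ and ${}^{B}[g]_A$ are homotopy equivalent. Then $f$ and $g$ induce conjugate maps on homology: there is an invertible element $u\in H_*(B)$ such that for every cycle $a\in A$, $[f_1(a)]=u\,[g_1(a)]\,u^{-1}$ in $H_*(B)$.
   Context: Work over $\mathbb{F}_2$ (no signs); tensor products are over $\mathbf{k}$. An $\mathcal{A}_\infty$-homomorphism $f\colon A\to B$ of differential algebras is a family of $\mathbf{k}$-bimodule maps $f_n\colon A^{\otimes n}\to B$, $n\ge1$, with $d_Bf_n(a_1,\dots,a_n)+\sum_i f_n(a_1,\dots,da_i,\dots,a_n)+\sum_{i=1}^{n-1}f_{n-1}(a_1,\dots,a_ia_{i+1},\dots,a_n)+\sum_{j=1}^{n-1}f_j(a_1,\dots,a_j)f_{n-j}(a_{j+1},\dots,a_n)=0$. A type DA structure ${}^BX_A$ is a $\mathbf{k}$-bimodule $X$ with maps $\delta_{1+n}\colon X\otimes A^{\otimes n}\to B\otimes X$ ($n\ge0$) satisfying $\sum_{j=0}^n(\mu_B\otimes\mathrm{Id})(\mathrm{Id}_B\otimes\delta_{1+n-j})(\delta_{1+j}(x,a_1,\dots,a_j)\otimes a_{j+1}\otimes\cdots\otimes a_n)+(d_B\otimes\mathrm{Id})\delta_{1+n}(x,a_1,\dots,a_n)+\sum_i\delta_{1+n}(x,\dots,da_i,\dots)+\sum_{i=1}^{n-1}\delta_n(x,\dots,a_ia_{i+1},\dots)=0$.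 The bimodule ${}^B[f]_A$ has underlying $\mathbf{k}$-bimodule $\mathbf{k}$, $\delta_1=0$, and (identifying $\mathbf{k}\otimes A^{\otimes n}$ with $A^{\otimes n}$ and $B\otimes\mathbf{k}$ with $B$) $\delta_{1+n}=f_n$ for $n\ge1$. A morphism $\phi\colon X\to Y$ of type DA structures is a family $\phi_{1+n}\colon X\otimes A^{\otimes n}\to B\otimes Y$; its differential is $(\partial\phi)_{1+n}(x,a_1,\dots,a_n)=\sum_{j=0}^n(\mu_B\otimes\mathrm{Id})(\mathrm{Id}\otimes\delta^Y_{1+n-j})(\phi_{1+j}(x,a_1,\dots,a_j)\otimes a_{j+1}\otimes\cdots\otimes a_n)+\sum_{j=0}^n(\mu_B\otimes\mathrm{Id})(\mathrm{Id}\otimes\phi_{1+n-j})(\delta^X_{1+j}(x,a_1,\dots,a_j)\otimes a_{j+1}\otimes\cdots\otimes a_n)+(d_B\otimes\mathrm{Id})\phi_{1+n}(x,a_1,\dots,a_n)+\sum_i\phi_{1+n}(x,\dots,da_i,\dots)+\sum_{i=1}^{n-1}\phi_n(x,\dots,a_ia_{i+1},\dots)$. Composition is $(\psi\circ\phi)_{1+n}(x,a_1,\dots,a_n)=\sum_j(\mu_B\otimes\mathrm{Id})(\mathrm{Id}\otimes\psi_{1+n-j})(\phi_{1+j}(x,a_1,\dots,a_j)\otimes a_{j+1}\otimes\cdots\otimes a_n)$, and the identity has $\mathrm{Id}_1(x)=1\otimes x$, $\mathrm{Id}_{1+n}=0$ for $n\ge1$. Two type DA structures are homotopy equivalent if there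 are morphisms $\phi\colon X\to Y$, $\psi\colon Y\to X$ with $\partial\phi=\partial\psi=0$ and morphisms $F,G$ with $\partial F=\psi\circ\phi+\mathrm{Id}_X$ and $\partial G=\phi\circ\psi+\mathrm{Id}_Y$. *)

(* Defs.v *)
From mathcomp Require Import all_boot all_algebra.
Set Implicit Arguments. Unset Strict Implicit. Unset Printing Implicit Defensive.
Import GRing.Theory.
Local Open Scope ring_scope.

(* The ground ring k = (F_2)^N is encoded through its N orthogonal idempotents
   e_1, ..., e_N (which span k over F_2).  A differential (graded) algebra over
   k is a ring R of characteristic 2 (= an F_2-algebra) with a ring map k -> R,
   i.e. orthogonal idempotents e i summing to 1, and a differential d which is
   a k-bimodule map, squares to zero and satisfies the Leibniz rule. *)
Definition is_dga (N : nat) (R : pzRingType) (e : 'I_N -> R) (d : R -> R) : Prop :=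
  [/\ 1 + 1 = 0 :> R,
      (forall i j, e i * e j = (if i == j then e i else 0)),
      \sum_(i < N) e i = 1 &
      (forall x y, d (x + y) = d x + d y)] /\
  [/\
      (forall x y, d (x * y) = d x * y + x * d y),
      (forall x, d (d x) = 0)
    & (forall i x, d (e i * x) = e i * d x /\ d (x * e i) = d x * e i)].

(* A k-bimodule map A^{(x)_k n} -> B, for every n >= 1, is encoded (universal
   property of the tensor product over k) by a function on lists of length n
   which is additive (= F_2-linear) in each slot, k-balanced between adjacent
   slots, and k-linear on the outer left and right. *)
Definition kmaps (N : nat) (A B : pzRingType) (eA : 'I_N -> A) (eB : 'I_N -> B)
    (phi : seq A -> B) : Prop :=
  [/\ (forall l1 l2 x y,
         phi (l1 ++ (x + y) :: l2) = phi (l1 ++ x :: l2) + phi (l1 ++ y :: l2)),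
      (forall i l1 l2 x y,
         phi (l1 ++ (x * eA i) :: y :: l2) = phi (l1 ++ x :: (eA i * y) :: l2)),
      (forall i x l, phi ((eA i * x) :: l) = eB i * phi (x :: l))
    & (forall i x l, phi (rcons l (x * eA i)) = phi (rcons l x) * eB i)].

Definition dslot (A : pzRingType) (dA : A -> A) (l : seq A) (i : nat) : seq A :=
  set_nth 0 l i (dA (nth 0 l i)).

Definition mslot (A : pzRingType) (l : seq A) (i : nat) : seq A :=
  take i l ++ (nth 0 l i * nth 0 l i.+1) :: drop i.+2 l.

(* An A_infinity-homomorphism f : A -> B; f_n is f restricted to lists of
   length n (the value f [::] is irrelevant). *)
Definition is_Ainf_hom (N : nat) (A B : pzRingType) (eA : 'I_N -> A) (dA : A -> A)
    (eB : 'I_N -> B) (dB : B -> B) (f : seq A -> B) : Prop :=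
  kmaps eA eB f /\
  forall l : seq A, (0 < size l)%N ->
    dB (f l)
    + \sum_(i < size l) f (dslot dA l i)
    + \sum_(i < (size l).-1) f (mslot l i)
    + \sum_(j < (size l).-1) f (take j.+1 l) * f (drop j.+1 l) = 0.

(* The structure maps of the rank-one type DA bimodule ^B[f]_A, whose
   underlying k-bimodule is k:  delta_1 = 0 and delta_{1+n} = f_n (n >= 1),
   using k (x)_k A^{(x)n} = A^{(x)n} and B (x)_k k = B. *)
Definition rk1_delta (A B : pzRingType) (f : seq A -> B) (l : seq A) : B :=
  if l is [::] then 0 else f l.

(* A morphism between rank-one type DA structures (underlying k-bimodule k):
   phi_{1+n} : k (x) A^{(x)n} -> B (x) k = B, encoded as a function on lists of
   length n >= 0.  phi_1 : k -> B is a k-bimodule map, i.e. determined by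
   phi [::] = phi_1(1), which must commute with the idempotents. *)
Definition is_rk1_morphism (N : nat) (A B : pzRingType) (eA : 'I_N -> A)
    (eB : 'I_N -> B) (phi : seq A -> B) : Prop :=
  kmaps eA eB phi /\ forall i, eB i * phi [::] = phi [::] * eB i.

Definition rk1_mdiff (A B : pzRingType) (dA : A -> A) (dB : B -> B)
    (dX dY : seq A -> B) (phi : seq A -> B) (l : seq A) : B :=
  \sum_(j < (size l).+1) phi (take j l) * dY (drop j l)
  + \sum_(j < (size l).+1) dX (take j l) * phi (drop j l)
  + dB (phi l)
  + \sum_(i < size l) phi (dslot dA l i)
  + \sum_(i < (size l).-1) phi (mslot l i).

Definition rk1_comp (A B : pzRingType) (psi phi : seq A -> B) (l : seq A) : B :=
  \sum_(j < (size l).+1) phi (take j l) * psi (drop j l).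

Definition rk1_id (A B : pzRingType) (l : seq A) : B :=
  if l is [::] then 1 else 0.

Definition rk1_homotopy_equivalent (N : nat) (A B : pzRingType) (eA : 'I_N -> A)
    (dA : A -> A) (eB : 'I_N -> B) (dB : B -> B) (f g : seq A -> B) : Prop :=
  let dX := rk1_delta f in
  let dY := rk1_delta g in
  exists phi psi F G : seq A -> B,
    [/\ is_rk1_morphism eA eB phi, is_rk1_morphism eA eB psi,
        is_rk1_morphism eA eB F & is_rk1_morphism eA eB G] /\
    [/\
        (forall l, rk1_mdiff dA dB dX dY phi l = 0),
        (forall l, rk1_mdiff dA dB dY dX psi l = 0),
        (forall l, rk1_mdiff dA dB dX dX F l = rk1_comp psi phi l + rk1_id B l)
      & (forall l, rk1_mdiff dA dB dY dY G l = rk1_comp phi psi l + rk1_id B l)].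

Definition is_cycle (B : pzRingType) (dB : B -> B) (x : B) : Prop := dB x = 0.
Definition is_boundary (B : pzRingType) (dB : B -> B) (x : B) : Prop :=
  exists y, dB y = x.
Definition homologous (B : pzRingType) (dB : B -> B) (x y : B) : Prop :=
  is_boundary dB (x - y).

(* Main.v *)
Require Import Defs.
From mathcomp Require Import all_boot all_algebra.
Import GRing.Theory.
Local Open Scope ring_scope.

Lemma ch2_opp (R : pzRingType) (z : R) : 1 + 1 = 0 :> R -> - z = z.
Proof.
move=> h; apply/eqP; rewrite -subr_eq0 -opprD.
have -> : z + z = (1 + 1) * z by rewrite mulrDl mul1r.
by rewrite h mul0r oppr0.
Qed.

Lemma kmaps0 (N : nat) (A B : pzRingType) (eA : 'I_N -> A) (eB : 'I_N -> B)
  (phi : seq A -> B) : kmaps eA eB phi -> phi [:: 0] = 0.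
Proof.
case=> k1 _ _ _; have := k1 [::] [::] 0 0; rewrite /= addr0.
move=> /(congr1 (fun t => t - phi [:: 0])); rewrite addrK subrr => h.
by rewrite h.
Qed.

Theorem lemma8p5 (N : nat) (A B : pzRingType)
    (eA : 'I_N -> A) (dA : A -> A) (eB : 'I_N -> B) (dB : B -> B)
    (f g : seq A -> B) :
  is_dga eA dA -> is_dga eB dB ->
  is_Ainf_hom eA dA eB dB f -> is_Ainf_hom eA dA eB dB g ->
  rk1_homotopy_equivalent eA dA eB dB f g ->
  exists u v : B,
    [/\ is_cycle dB u, is_cycle dB v,
        homologous dB (u * v) 1, homologous dB (v * u) 1
      & forall a : A, is_cycle dA a ->
          homologous dB (f [:: a]) (u * g [:: a] * v)].
Proof.
move=> _ [[c2 _ _ dadd] [dleib _ _]] [kf hf] _.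
move=> [phi [psi [F [G [[[kphi _] [kpsi _] _ _] [mphi mpsi mF mG]]]]]].
have dx : dB (phi [::]) = 0.
  have := mphi [::]; rewrite /rk1_mdiff /= !big_ord_recr !big_ord0 /=.
  by rewrite !mulr0 !mul0r !add0r !addr0.
have dy : dB (psi [::]) = 0.
  have := mpsi [::]; rewrite /rk1_mdiff /= !big_ord_recr !big_ord0 /=.
  by rewrite !mulr0 !mul0r !add0r !addr0.
have hF : dB (F [::]) = phi [::] * psi [::] + 1.
  have := mF [::]; rewrite /rk1_mdiff /rk1_comp /= !big_ord_recr !big_ord0 /=.
  by rewrite !mulr0 !mul0r !add0r !addr0.
have hG : dB (G [::]) = psi [::] * phi [::] + 1.
  have := mG [::]; rewrite /rk1_mdiff /rk1_comp /= !big_ord_recr !big_ord0 /=.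
  by rewrite !mulr0 !mul0r !add0r !addr0.
exists (phi [::]), (psi [::]); split => //.
- by exists (F [::]); rewrite hF (@ch2_opp _ _ c2).
- by exists (G [::]); rewrite hG (@ch2_opp _ _ c2).
move=> a ca.
have hfa : dB (f [:: a]) = 0.
  have := hf [:: a] isT; rewrite /= !big_ord_recr !big_ord0 /dslot /= ca.
  by rewrite (@kmaps0 _ _ _ eA eB f kf) !add0r !addr0.
have hpa : dB (phi [:: a]) = phi [::] * g [:: a] + f [:: a] * phi [::].
  have := mphi [:: a]; rewrite /rk1_mdiff /dslot /= !big_ord_recr !big_ord0 /= ca.
  rewrite (@kmaps0 _ _ _ eA eB phi kphi) !mulr0 !mul0r !add0r !addr0 => /eqP.
  rewrite addr_eq0 (@ch2_opp _ _ c2) => /eqP ->.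
  by [].
exists (f [:: a] * F [::] + phi [:: a] * psi [::]).
rewrite dadd !dleib hfa hF hpa dy mul0r mulr0 !add0r addr0 (@ch2_opp _ _ c2).
rewrite mulrDr mulr1 mulrDl !mulrA.
set p := f [:: a] * phi [::] * psi [::].
have pp : p + p = 0.
  by rewrite -{1}(@ch2_opp _ p c2) addNr.
by rewrite [p + _]addrC -addrA (addrCA p) pp addr0.
Qed.
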